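(* For each $m\ge1$, the sequence $(v_{k;m})_{k\ge0}$ is bounded above by $b=v_{k;0}$, is strictly decreasing in $k$, and converges to $b/(m+1)$ as $k\to\infty$.
   Context: Fix $b\ge2$ and $d\in\{0,\dots,b-1\}$. A string is a finite sequence $X=(d_l,\dots,d_1)$ of digits in $\{0,\dots,b-1\}$ (leading zeros allowed), of length $|X|=l\ge0$; its value is $n(X)=\sum_{i=1}^{l}d_ib^{i-1}$ ($0$ for the empty string). For $k\ge0$, $\mu_k=\sum_{X}b^{-|X|}\delta_{n(X)/b^{|X|}}$, the sum over all strings $X$ containing $d$ exactly $k$ times; it is a finite measure on $[0,1)$ of total mass $b$. The complementary moments are $v_{k;m}=\int_{[0,1)}(1-x)^m\,d\mu_k(x)$. *)

(* Defs.v *)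
From HB Require Import structures.
From mathcomp Require Import all_boot all_order all_algebra.
From mathcomp Require Import all_classical all_reals all_analysis.
Set Implicit Arguments. Unset Strict Implicit. Unset Printing Implicit Defensive.
Import Order.TTheory GRing.Theory Num.Theory.
Import numFieldNormedType.Exports.
Local Open Scope ring_scope.

(* A string of length l over digits {0,..,b-1} is an l-tuple X of 'I_b;
   X`_0 is the leftmost (most significant) digit d_l, X`_(l-1) is d_1.
   Its value n(X) = sum_{i=1}^l d_i b^(i-1). *)
Definition nval (b l : nat) (X : l.-tuple 'I_b) : nat :=
  (\sum_(i < l) (tnth X i : nat) * b ^ (l - 1 - i))%N.

Definition dcount (b d l : nat) (X : l.-tuple 'I_b) : nat :=
  count (fun x : 'I_b => (x : nat) == d) X.

(* Complementary moment v_{k;m} = \int_[0,1) (1-x)^m dmu_k(x), where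
   mu_k = sum_X b^{-|X|} delta_{n(X)/b^{|X|}} over strings with exactly k
   digits d.  Integrating against this countable sum of weighted Dirac
   masses gives the series below (grouped by length l). *)
Definition vterm (R : realType) (b d k m : nat) (l : nat) : R :=
  \sum_(X : l.-tuple 'I_b | dcount d X == k)
     (b%:R ^+ l)^-1 * (1 - (nval X)%:R / b%:R ^+ l) ^+ m.

Definition vmom (R : realType) (b d k m : nat) : R :=
  limn (series (vterm R b d k m)).

(* Main.v *)
Require Import Defs.
From HB Require Import structures.
From mathcomp Require Import all_boot all_order all_algebra.
From mathcomp Require Import all_classical all_reals all_analysis.
From mathcomp Require Import zify ring lra.
Import Order.TTheory GRing.Theory Num.Theory.
Import numFieldNormedType.Exports.
Local Open Scope classical_set_scope.
Local Open Scope ring_scope.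
Set Implicit Arguments. Unset Strict Implicit. Unset Printing Implicit Defensive.

Lemma sum_tupleS (V : nmodType) (T : finType) (l : nat) (F : l.+1.-tuple T -> V) :
  \sum_(X : l.+1.-tuple T) F X = \sum_(c : T) \sum_(Y : l.-tuple T) F [tuple of c :: Y].
Proof.
rewrite pair_big /=.
rewrite (reindex (fun p : T * l.-tuple T => [tuple of p.1 :: p.2])) //=.
exists (fun X : l.+1.-tuple T => (thead X, [tuple of behead X])) => [[c Y] _|X _] /=.
  by rewrite theadE; congr pair; apply: val_inj.
by rewrite -tuple_eta.
Qed.

Lemma nval_cons (b l : nat) (c : 'I_b) (Y : l.-tuple 'I_b) :
  nval [tuple of c :: Y] = (c * b ^ l + nval Y)%N.
Proof.
rewrite /nval big_ord_recl /=.
have -> : tnth [tuple of c :: Y] ord0 = c by [].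
have -> : (l.+1 - 1 - 0 = l)%N by rewrite subSS !subn0.
congr addn; apply: eq_bigr => i _.
rewrite (tnthS c Y i).
congr (_ * b ^ _)%N; rewrite /bump /= add1n subSS; lia.
Qed.

Lemma dcount_cons (b d l : nat) (c : 'I_b) (Y : l.-tuple 'I_b) :
  dcount d [tuple of c :: Y] = ((c == d :> nat) + dcount d Y)%N.
Proof. by []. Qed.

Lemma nval_lt (b l : nat) (X : l.-tuple 'I_b) : (nval X < b ^ l)%N.
Proof.
elim: l X => [|l IH] X.
  by rewrite /nval big_ord0.
rewrite (tuple_eta X) nval_cons expnS.
have := IH [tuple of behead X]; have := ltn_ord (thead X).
move: (nval _) (thead X : nat) => n c hc hn.
apply: (@leq_trans ((c.+1) * b ^ l)); first by rewrite mulSn addnC ltn_add2r.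
by rewrite leq_mul2r hc orbT.
Qed.

Lemma cvg_big (R : realType) (I : Type) (r : seq I) (P : pred I) (F : I -> nat -> R) (l : I -> R) :
 (forall i, P i -> F i n @[n --> \oo] --> l i) ->
 (fun N => \sum_(i <- r | P i) F i N) @ \oo --> \sum_(i <- r | P i) l i.
Proof.
move=> h; elim: r => [|a r IH].
  have -> : (fun N => \sum_(i <- [::] | P i) F i N) = fun=> 0 by apply: funext => N; rewrite big_nil.
  rewrite big_nil; exact: cvg_cst.
have -> : (fun N => \sum_(i <- a :: r | P i) F i N) =
   fun N => (if P a then F a N else 0) + \sum_(i <- r | P i) F i N.
  by apply: funext => N; rewrite big_cons; case: (P a); rewrite ?add0r.
rewrite big_cons; case hP: (P a).
  exact: cvgD (h a hP) IH.
rewrite -[X in _ --> X]add0r; apply: cvgD => //; exact: cvg_cst.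
Qed.

Lemma cvg_cM (R : realType) (c : R) (u : nat -> R) l :
  u n @[n --> \oo] --> l -> (fun n => c * u n) @ \oo --> c * l.
Proof. move=> h; exact: cvgMr h. Qed.

Section S.
Variables (R : realType) (b d : nat) (hb : (2 <= b)%N) (hd : (d < b)%N).

Definition uX l (X : l.-tuple 'I_b) : R := 1 - (nval X)%:R / (b%:R ^+ l).
Definition gs k l (F : R -> R) : R :=
  \sum_(X : l.-tuple 'I_b | dcount d X == k) (b%:R ^+ l)^-1 * F (uX X).
Definition ec (c : nat) : R := (b.-1 - c)%:R.

Lemma B_gt0 : 0 < (b%:R : R).
Proof. by rewrite ltr0n; lia. Qed.
Lemma Bl_gt0 l : 0 < (b%:R : R) ^+ l.
Proof. exact: exprn_gt0 B_gt0. Qed.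

Lemma uX_cons l (c : 'I_b) (Y : l.-tuple 'I_b) :
  uX [tuple of c :: Y] = (ec c + uX Y) / b%:R.
Proof.
rewrite /uX /ec nval_cons natrD natrM natrX natrB; last by have := ltn_ord c; lia.
have -> : (b.-1)%:R = (b%:R - 1 : R).
  have hb0 : (0 < b)%N by lia.
  by rewrite -[in RHS](prednK hb0) -natr1 addrK.
have h1 := Bl_gt0 l; have h2 := B_gt0.
rewrite exprS; field; apply/andP; split; rewrite lt0r_neq0 //.
Qed.

Lemma uX_ge0 l (X : l.-tuple 'I_b) : 0 < uX X.
Proof.
rewrite /uX subr_gt0 ltr_pdivrMr ?Bl_gt0 // mul1r -natrX ltr_nat; exact: nval_lt.
Qed.

Lemma uX_le1 l (X : l.-tuple 'I_b) : uX X <= 1.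
Proof.
rewrite /uX lerBlDr lerDl; apply: divr_ge0 => //; apply: ltW; exact: Bl_gt0.
Qed.

Lemma gs_succ k l F :
  gs k l.+1 F = (b%:R)^-1 * (\sum_(c < b | (c:nat) != d) gs k l (fun t => F ((ec c + t) / b%:R))
     + (if k is k'.+1 then gs k' l (fun t => F ((ec d + t) / b%:R)) else 0)).
Proof.
rewrite /gs big_mkcond sum_tupleS (bigD1 (Ordinal hd)) //= addrC mulrDr.
congr (_ + _).
  rewrite mulr_sumr; apply: eq_big => [c|c hc]; first by rewrite -val_eqE.
  move: hc; rewrite -val_eqE /= => hc.
  rewrite mulr_sumr [RHS]big_mkcond; apply: eq_bigr => Y _.
  rewrite dcount_cons (negbTE hc) add0n; case: ifP => // _.
  by rewrite uX_cons exprS invfM mulrA.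
case: k => [|k].
  by rewrite mulr0 big1 // => Y _; rewrite dcount_cons eqxx.
rewrite mulr_sumr [RHS]big_mkcond; apply: eq_bigr => Y _.
rewrite dcount_cons eqxx add1n eqSS; case: ifP => // _.
by rewrite uX_cons exprS invfM mulrA.
Qed.

Lemma gs0 k F : gs k 0 F = (k == 0)%:R * F 1.
Proof.
rewrite /gs big_mkcond (bigD1 [tuple]) //= big1 ?addr0; last first.
  by move=> X /negP[]; rewrite tuple0.
have -> : dcount d ([tuple] : 0.-tuple 'I_b) = 0%N by [].
rewrite /uX /nval big_ord0 expr0 invr1 mul0r subr0 mul1r eq_sym.
by case: (k == 0%N); rewrite ?mul1r ?mul0r.
Qed.

Lemma gs_sum k l (I : Type) (r : seq I) (P : pred I) (f : I -> R -> R) :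
  gs k l (fun t => \sum_(i <- r | P i) f i t) = \sum_(i <- r | P i) gs k l (f i).
Proof.
rewrite /gs exchange_big /=; apply: eq_bigr => X _; by rewrite mulr_sumr.
Qed.

Lemma gs_scale k l a f : gs k l (fun t => a * f t) = a * gs k l f.
Proof. rewrite /gs mulr_sumr; apply: eq_bigr => X _; by rewrite mulrCA. Qed.

Lemma gs_add k l f g : gs k l (fun t => f t + g t) = gs k l f + gs k l g.
Proof. rewrite /gs -big_split /=; apply: eq_bigr => X _; by rewrite mulrDr. Qed.

Lemma gs_sub k l f g : gs k l (fun t => f t - g t) = gs k l f - gs k l g.
Proof. rewrite /gs -sumrB /=; apply: eq_bigr => X _; by rewrite mulrBr. Qed.

Lemma gs_le k l f g : (forall t, 0 < t <= 1 -> f t <= g t) -> gs k l f <= gs k l g.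
Proof.
move=> h; rewrite /gs; apply: ler_sum => X _; rewrite ler_pM2l ?invr_gt0 ?Bl_gt0 //.
by apply: h; rewrite uX_ge0 uX_le1.
Qed.

Definition M k j l := gs k l (fun t => t ^+ j).

Lemma M_vterm k j l : M k j l = vterm R b d k j l.
Proof. by []. Qed.

Definition Rop (x : R) j (V : nat -> R) :=
  \sum_(i < j.+1) 'C(j, i)%:R * x ^+ (j - i) * V i.

Lemma gs_shift k l x j :
  gs k l (fun t => ((x + t) / b%:R) ^+ j) = (b%:R ^+ j)^-1 * Rop x j (fun i => M k i l).
Proof.
have -> : (fun t => ((x + t) / b%:R) ^+ j) = (fun t => (b%:R ^+ j)^-1 *
     \sum_(i < j.+1) ('C(j, i)%:R * x ^+ (j - i)) * t ^+ i).
  apply: funext => t; rewrite expr_div_n exprDn mulrC; congr (_ * _).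
  by apply: eq_bigr => i _; rewrite -mulr_natl mulrA.
rewrite gs_scale gs_sum; congr (_ * _); apply: eq_bigr => i _.
exact: gs_scale.
Qed.

Lemma sum_split_d (f : 'I_b -> R) :
  \sum_(c < b) f c = f (Ordinal hd) + \sum_(c < b | (c:nat) != d) f c.
Proof.
rewrite (bigD1 (Ordinal hd)) //=; congr (_ + _); apply: eq_bigl => c.
Qed.

Lemma M_succ k j l :
  M k j l.+1 = (b%:R ^+ j.+1)^-1 * (\sum_(c < b | (c:nat) != d) Rop (ec c) j (fun i => M k i l)
     + (if k is k'.+1 then Rop (ec d) j (fun i => M k' i l) else 0)).
Proof.
rewrite /M gs_succ exprS invfM -mulrA; congr (_ * _).
rewrite mulrDr mulr_sumr; congr (_ + _).
  by apply: eq_bigr => c _; rewrite gs_shift.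
by case: k => [|k]; rewrite ?mulr0 // gs_shift.
Qed.

Lemma M0 k j : M k j 0 = (k == 0)%:R.
Proof. by rewrite /M gs0 expr1n mulr1. Qed.

Lemma M_ge0 k j l : 0 <= M k j l.
Proof.
rewrite /M /gs; apply: sumr_ge0 => X _; apply: mulr_ge0.
  by rewrite invr_ge0 ltW ?Bl_gt0.
by apply: exprn_ge0; apply: ltW; apply: uX_ge0.
Qed.

Lemma M_le0 k j l : M k j l <= M k 0 l.
Proof.
apply: gs_le => t /andP[t0 t1]; rewrite expr0; apply: exprn_ile1 => //; exact: ltW.
Qed.


Lemma Rop_sum x j (I : Type) (r : seq I) (P : pred I) (V : I -> nat -> R) :
  Rop x j (fun i => \sum_(l <- r | P l) V l i) = \sum_(l <- r | P l) Rop x j (V l).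
Proof.
rewrite /Rop exchange_big /=; apply: eq_bigr => i _; by rewrite mulr_sumr.
Qed.

Lemma Rop0 x V : Rop x 0 V = V 0%N.
Proof. by rewrite /Rop big_ord1 bin0 expr0 !mul1r. Qed.

Definition S k j := series (M k j).

Lemma S_succ k j N :
  S k j N.+1 = (k == 0)%:R + (b%:R ^+ j.+1)^-1 *
    (\sum_(c < b | (c:nat) != d) Rop (ec c) j (fun i => S k i N)
     + (if k is k'.+1 then Rop (ec d) j (fun i => S k' i N) else 0)).
Proof.
rewrite /S /series /= big_nat_recl // M0; congr (_ + _).
under eq_bigr do rewrite M_succ.
rewrite -mulr_sumr big_split /=; congr (_ * (_ + _)).
  rewrite exchange_big /=; apply: eq_bigr => c _.
  by rewrite /Rop [LHS]exchange_big /=; apply: eq_bigr => i _; rewrite mulr_sumr.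
case: k => [|k]; first by rewrite big1.
by rewrite /Rop [LHS]exchange_big /=; apply: eq_bigr => i _; rewrite mulr_sumr.
Qed.

Lemma S0 k j : S k j 0 = 0.
Proof. by rewrite /S /series /= big_geq. Qed.

Lemma S_bound k N : S k 0 N <= b%:R.
Proof.
elim: N k => [|N IH] k; first by rewrite S0 ler0n.
have hB := B_gt0.
have hsum : \sum_(c < b | (c:nat) != d) S k 0 N <= b%:R * b%:R - b%:R.
  have e2 := sum_split_d (fun _ => (b%:R : R)).
  have e3 : \sum_(c < b) (b%:R : R) = b%:R * b%:R by rewrite sumr_const card_ord mulr_natr.
  have e4 : \sum_(c < b | (c:nat) != d) S k 0 N <= \sum_(c < b | (c:nat) != d) (b%:R : R).
    by apply: ler_sum => c _; apply: IH.
  simpl in e2; lra.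
have hinv : (b%:R : R)^-1 * (b%:R * b%:R - b%:R) = b%:R - 1.
  by field; rewrite lt0r_neq0.
have hi : 0 <= (b%:R : R)^-1 by rewrite invr_ge0 ltW.
rewrite S_succ expr1.
under eq_bigr do rewrite Rop0.
case: k hsum => [|k] hsum.
  rewrite addr0 (_ : ((0%N == 0%N)%:R : R) = 1) //.
  have := ler_wpM2l hi hsum; lra.
rewrite (_ : ((k.+1 == 0%N)%:R : R) = 0) // add0r Rop0.
have h2 := IH k.
have := ler_wpM2l hi (lerD hsum h2).
have -> : (b%:R : R)^-1 * (b%:R * b%:R - b%:R + b%:R) = b%:R by field; rewrite lt0r_neq0.
by [].
Qed.

Lemma S_le0 k j N : S k j N <= S k 0 N.
Proof. rewrite /S /series /=; apply: ler_sum => l _; exact: M_le0. Qed.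

Lemma S_homo k j : {homo S k j : n m / (n <= m)%N >-> n <= m}.
Proof. by apply: nondecreasing_series => n _ _; exact: M_ge0. Qed.

Lemma S_cvg k j : cvgn (S k j).
Proof.
apply: nondecreasing_is_cvgn; first exact: S_homo.
exists b%:R => _ [n _ <-]; exact: le_trans (S_le0 _ _ _) (S_bound _ _).
Qed.

Definition W k j := limn (S k j).

Lemma W_vmom k j : W k j = vmom R b d k j.
Proof. by []. Qed.

Lemma Rop_cvg x j (V : nat -> nat -> R) L :
  (forall i, V i n @[n --> \oo] --> L i) ->
  (fun N => Rop x j (fun i => V i N)) @ \oo --> Rop x j L.
Proof. move=> h; rewrite /Rop; apply: cvg_big => i _; exact: cvg_cM. Qed.

Lemma W_rec k j : W k j = (k == 0)%:R + (b%:R ^+ j.+1)^-1 *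
    (\sum_(c < b | (c:nat) != d) Rop (ec c) j (W k)
     + (if k is k'.+1 then Rop (ec d) j (W k') else 0)).
Proof.
have h1 : (fun N => S k j N.+1) @ \oo --> W k j.
  by rewrite (cvg_shiftS (S k j)); exact: S_cvg.
have h2 : (fun N => S k j N.+1) @ \oo --> (k == 0)%:R + (b%:R ^+ j.+1)^-1 *
    (\sum_(c < b | (c:nat) != d) Rop (ec c) j (W k)
     + (if k is k'.+1 then Rop (ec d) j (W k') else 0)).
  under eq_fun do rewrite S_succ.
  apply: cvgD; first exact: cvg_cst.
  apply: cvg_cM; apply: cvgD.
    apply: cvg_big => c _; apply: Rop_cvg => i; exact: S_cvg.
  case: k {h1} => [|k]; first exact: cvg_cst.
  apply: Rop_cvg => i; exact: S_cvg.
have := cvg_lim (@Rhausdorff R) h1; rewrite (cvg_lim (@Rhausdorff R) h2) => <-.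
by [].
Qed.

Lemma sum_nd_const (a : R) : \sum_(c < b | (c:nat) != d) a = (b%:R - 1) * a.
Proof.
have e := sum_split_d (fun _ => a); simpl in e.
have e3 : \sum_(c < b) a = b%:R * a by rewrite sumr_const card_ord mulr_natl.
lra.
Qed.

Lemma W_le0 k j : W k j <= W k 0.
Proof. by apply: (lim_series_le (@S_cvg k j) (@S_cvg k 0)) => n; exact: M_le0. Qed.

Lemma W_ge0 k j : 0 <= W k j.
Proof.
have := nondecreasing_cvgn_le (S_homo k j) (@S_cvg k j) 0.
by rewrite S0.
Qed.

Lemma sumRop0 V : \sum_(c < b | (c:nat) != d) Rop (ec c) 0 V = (b%:R - 1) * V 0%N.
Proof. by rewrite -sum_nd_const; apply: eq_bigr => c _; rewrite Rop0. Qed.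

Lemma W0 k : W k 0 = b%:R.
Proof.
have hB := B_gt0.
elim: k => [|k IH].
  have E := W_rec 0 0; rewrite addr0 expr1 sumRop0 in E.
  set w := W 0 0 in E *.
  have E2 : b%:R * w = b%:R * 1 + (b%:R - 1) * w.
    by rewrite {1}E (_ : ((0%N == 0%N)%:R : R) = 1) // mulrDr mulrA mulfV ?mul1r // lt0r_neq0.
  lra.
have E := W_rec k.+1 0; rewrite expr1 sumRop0 Rop0 IH in E.
rewrite (_ : ((k.+1 == 0%N)%:R : R) = 0) // add0r in E.
set w := W k.+1 0 in E *.
have E2 : b%:R * w = (b%:R - 1) * w + b%:R.
  by rewrite {1}E mulrA mulfV ?mul1r // lt0r_neq0.
lra.
Qed.

Lemma Rop_split x j V :
  Rop x j V = V j + \sum_(i < j) 'C(j, i)%:R * x ^+ (j - i) * V i.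
Proof.
rewrite /Rop big_ord_recr /= binn subnn expr0 !mul1r addrC; congr (_ + _).
Qed.

Lemma Rop_linB x j V U :
  Rop x j (fun i => V i - U i) = Rop x j V - Rop x j U.
Proof. rewrite /Rop -sumrB; apply: eq_bigr => i _; by rewrite mulrBr. Qed.

Lemma rest_ge0 (x : R) j (V : nat -> R) : 0 <= x -> (forall i, (i < j)%N -> 0 <= V i) ->
  0 <= \sum_(i < j) 'C(j, i)%:R * x ^+ (j - i) * V i.
Proof.
move=> hx hV; apply: sumr_ge0 => i _; apply: mulr_ge0; last exact: hV.
by apply: mulr_ge0; rewrite ?ler0n ?exprn_ge0.
Qed.

Lemma ec_ge0 c : 0 <= ec c.
Proof. by rewrite ler0n. Qed.

Definition D k := fun i => W k i - W k.+1 i.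

Lemma sumRopD (j : nat) V U :
  \sum_(c < b | (c:nat) != d) Rop (ec c) j (fun i => V i - U i) =
  \sum_(c < b | (c:nat) != d) Rop (ec c) j V - \sum_(c < b | (c:nat) != d) Rop (ec c) j U.
Proof. by rewrite -sumrB; apply: eq_bigr => c _; rewrite Rop_linB. Qed.

Lemma D_rec k j : D k.+1 j = (b%:R ^+ j.+1)^-1 *
   (\sum_(c < b | (c:nat) != d) Rop (ec c) j (D k.+1) + Rop (ec d) j (D k)).
Proof.
rewrite /D sumRopD Rop_linB [W k.+1 j]W_rec [W k.+2 j]W_rec.
rewrite /=; ring.
Qed.

Lemma D_base j : D 0 j = 1 - (b%:R ^+ j.+1)^-1 * Rop (ec d) j (W 0) +
   (b%:R ^+ j.+1)^-1 * \sum_(c < b | (c:nat) != d) Rop (ec c) j (D 0).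
Proof.
rewrite /D sumRopD [W 0 j]W_rec [W 1 j]W_rec.
rewrite (_ : ((0%N == 0%N)%:R : R) = 1) // (_ : ((1%N == 0%N)%:R : R) = 0) // addr0 add0r.
rewrite /=; ring.
Qed.

Lemma ec_eq (c : nat) : (c < b)%N -> ec c = b%:R - 1 - c%:R.
Proof.
move=> hc; rewrite /ec natrB; last by lia.
have hb0 : (0 < b)%N by lia.
by rewrite -[in RHS](prednK hb0) -natr1 addrK.
Qed.

Lemma gs1 k l : gs k l (fun=> 1) = M k 0 l.
Proof. by rewrite /M; congr gs; apply: funext => t; rewrite expr0. Qed.

Section Base.
Variable j : nat.
Hypothesis hj : (0 < j)%N.

Definition hh l := (b%:R)^-1 * gs 0 l (fun t => 1 - ((ec d + t) / b%:R) ^+ j).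

Lemma hh_eq l : hh l = (b%:R)^-1 * M 0 0 l - (b%:R ^+ j.+1)^-1 * Rop (ec d) j (fun i => M 0 i l).
Proof.
rewrite /hh gs_sub gs1 gs_shift mulrBr exprS invfM mulrA; congr (_ - _).
Qed.

Lemma hh_ge0 l : 0 <= hh l.
Proof.
rewrite /hh; apply: mulr_ge0; first by rewrite invr_ge0 ltW ?B_gt0.
have -> : (0 : R) = gs 0 l (fun=> 0) by rewrite /gs big1 // => X _; rewrite mulr0.
apply: gs_le => t /andP[t0 t1]; rewrite subr_ge0; apply: exprn_ile1.
  by apply: divr_ge0; [apply: addr_ge0; [exact: ec_ge0|exact: ltW]|exact: ltW B_gt0].
rewrite ler_pdivrMr ?B_gt0 // mul1r ec_eq //; have := ler0n R d; lra.
Qed.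

Lemma hh1_gt0 : 0 < hh 1.
Proof.
have hB := B_gt0.
have h1b : (1 < b)%N by [].
have h0b : (0 < b)%N by lia.
pose c0 : 'I_b := if d == 0%N then Ordinal h1b else Ordinal h0b.
pose X0 : 1.-tuple 'I_b := [tuple of c0 :: ([tuple] : 0.-tuple 'I_b)].
have hX0 : dcount d X0 == 0%N.
  rewrite dcount_cons /c0; case: ifP => [/eqP ->|/negbT hd0] //=.
  rewrite /= (_ : (0%N == d) = false) //; apply/eqP => h; move: hd0; by rewrite -h.
have hu : uX X0 = (ec c0 + 1) / b%:R.
  rewrite uX_cons; congr ((_ + _) / _).
  by rewrite /uX /nval big_ord0 mul0r subr0.
rewrite /hh pmulr_rgt0 ?invr_gt0 //.
rewrite /gs (bigD1 X0) //=; apply: (@lt_le_trans _ _ ((b%:R ^+ 1)^-1 * (1 - ((ec d + uX X0) / b%:R) ^+ j))).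
  apply: mulr_gt0; first by rewrite invr_gt0 exprn_gt0.
  rewrite subr_gt0 expr_lt1 //; last first.
    by apply: divr_ge0; [apply: addr_ge0; [exact: ec_ge0|exact: ltW (uX_ge0 _)]|exact: ltW].
  rewrite ltr_pdivrMr // mul1r hu ec_eq //.
  have hc0 : (c0 < b)%N by [].
  rewrite ec_eq //.
  have hy : (b%:R - 1 - (c0 : nat)%:R + 1) / b%:R <= (1 : R).
    by rewrite ler_pdivrMr // mul1r; have := ler0n R c0; lra.
  rewrite /c0; case: ifP => [/eqP d0|/negbT d0].
    rewrite d0 /=.
    have hy2 : (b%:R - 1 - 1%:R + 1) / b%:R < (1 : R).
      by rewrite ltr_pdivrMr // mul1r; lra.
    lra.
  have : (1 : R) <= d%:R by rewrite ler1n lt0n.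
  move: hy; rewrite /c0 (negbTE d0) /= => hy; lra.
rewrite lerDl; apply: sumr_ge0 => X _; apply: mulr_ge0.
  by rewrite invr_ge0 ltW // exprn_gt0.
rewrite subr_ge0; apply: exprn_ile1.
  by apply: divr_ge0; [apply: addr_ge0; [exact: ec_ge0|exact: ltW (uX_ge0 _)]|exact: ltW].
rewrite ler_pdivrMr // mul1r ec_eq //; have := ler0n R d; have := uX_le1 X; lra.
Qed.


Lemma T0_gt0 : 0 < 1 - (b%:R ^+ j.+1)^-1 * Rop (ec d) j (W 0).
Proof.
have hB := B_gt0.
have E : series hh = fun N => (b%:R)^-1 * S 0 0 N - (b%:R ^+ j.+1)^-1 * Rop (ec d) j (fun i => S 0 i N).
  apply: funext => N; rewrite /series /=.
  under eq_bigr do rewrite hh_eq.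
  rewrite sumrB -!mulr_sumr; congr (_ - _ * _).
  by rewrite /Rop [LHS]exchange_big /=; apply: eq_bigr => i _; rewrite mulr_sumr.
have hc : series hh @ \oo --> (b%:R)^-1 * W 0 0 - (b%:R ^+ j.+1)^-1 * Rop (ec d) j (W 0).
  rewrite E; apply: cvgB; first by apply: cvg_cM; exact: S_cvg.
  by apply: cvg_cM; apply: Rop_cvg => i; exact: S_cvg.
rewrite W0 mulVf ?lt0r_neq0 // in hc.
have hom : {homo series hh : n m / (n <= m)%N >-> n <= m}.
  by apply: nondecreasing_series => n _ _; exact: hh_ge0.
have hcv : cvgn (series hh) by apply/cvg_ex; eexists; exact: hc.
have := nondecreasing_cvgn_le hom hcv 2.
rewrite (cvg_lim (@Rhausdorff R) hc).
have -> : series hh 2 = hh 0 + hh 1 by rewrite /series /= big_nat_recr //= big_nat1.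
have := hh_ge0 0; have := hh1_gt0; lra.
Qed.
End Base.

Lemma D0 k : D k 0 = 0.
Proof. by rewrite /D !W0 subrr. Qed.

Lemma Bpow_ge j : (b%:R : R) <= b%:R ^+ j.+1.
Proof.
rewrite exprS ler_peMr ?ler0n //; apply: exprn_ege1; rewrite ler1n; lia.
Qed.

Lemma step_pos j (V : nat -> R) (T : R) :
  (forall i, (i < j)%N -> 0 <= V i) -> 0 < T ->
  V j = (b%:R ^+ j.+1)^-1 * (\sum_(c < b | (c:nat) != d) Rop (ec c) j V + T) -> 0 < V j.
Proof.
move=> hV hT E.
have hB := B_gt0.
have hBj := Bpow_ge j.
have hBj0 : 0 < (b%:R : R) ^+ j.+1 by exact: Bl_gt0.
pose r := \sum_(c < b | (c:nat) != d) \sum_(i < j) 'C(j, i)%:R * (ec c) ^+ (j - i) * V i.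
have hs : \sum_(c < b | (c:nat) != d) Rop (ec c) j V = (b%:R - 1) * V j + r.
  rewrite -sum_nd_const -big_split /=; apply: eq_bigr => c _; exact: Rop_split.
have hr : 0 <= r.
  by apply: sumr_ge0 => c _; apply: rest_ge0 => //; exact: ec_ge0.
have E2 : b%:R ^+ j.+1 * V j = (b%:R - 1) * V j + r + T.
  rewrite {1}E hs mulrA mulfV ?mul1r; first by rewrite ?addrA.
  exact: lt0r_neq0.
have E3 : (b%:R ^+ j.+1 - b%:R + 1) * V j = r + T by rewrite mulrDl mulrBl E2 mul1r; ring.
have hpos : 0 < b%:R ^+ j.+1 - b%:R + (1 : R) by lra.
have : 0 < (b%:R ^+ j.+1 - b%:R + 1) * V j by rewrite E3; lra.
by rewrite pmulr_rgt0.
Qed.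

Lemma D_pos k j : (0 < j)%N -> 0 < D k j.
Proof.
elim: k j => [|k IH] j.
  elim/ltn_ind: j => j IHj hj.
  apply: (@step_pos j (D 0) (b%:R ^+ j.+1 * (1 - (b%:R ^+ j.+1)^-1 * Rop (ec d) j (W 0)))).
  - move=> i hi; case: i hi => [|i] hi; first by rewrite D0.
    by apply: ltW; apply: IHj.
  - by apply: mulr_gt0; [exact: Bl_gt0|exact: T0_gt0].
  - rewrite D_base mulrDr mulrA mulVf ?mul1r; first ring.
    exact: lt0r_neq0 (Bl_gt0 _).
elim/ltn_ind: j => j IHj hj.
apply: (@step_pos j (D k.+1) (Rop (ec d) j (D k))).
- move=> i hi; case: i hi => [|i] hi; first by rewrite D0.
  by apply: ltW; apply: IHj.
- rewrite Rop_split; apply: ltr_pwDl; first exact: IH.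
  apply: rest_ge0; first exact: ec_ge0.
  by move=> [|i] hi; [rewrite D0|apply: ltW; apply: IH].
- exact: D_rec.
Qed.

Lemma telesc (n N : nat) :
  \sum_(c < N) (((N - c)%:R : R) ^+ n - ((N - c.+1)%:R) ^+ n) = (N%:R) ^+ n - (0%:R) ^+ n.
Proof.
elim: N => [|N IH]; first by rewrite big_ord0 subrr.
rewrite big_ord_recl /= subn0 subSS subn0.
have -> : \sum_(i < N) (((N.+1 - bump 0 i)%:R : R) ^+ n - ((N.+1 - (bump 0 i).+1)%:R) ^+ n)
   = \sum_(c < N) (((N - c)%:R : R) ^+ n - ((N - c.+1)%:R) ^+ n).
  by apply: eq_bigr => i _; rewrite /bump /= add1n !subSS.
rewrite IH; ring.
Qed.

Definition Lf (i : nat) : R := b%:R / (i.+1)%:R.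

Lemma sum_binom_div (x : R) j :
  \sum_(i < j.+1) 'C(j, i)%:R * x ^+ (j - i) * Lf i =
  b%:R / (j.+1)%:R * ((x + 1) ^+ j.+1 - x ^+ j.+1).
Proof.
rewrite exprDn (big_ord_recl j.+1) /= subn0 expr0 mulr1 bin0 mulr1n (addrC (x ^+ j.+1)) addrK.
rewrite mulr_sumr; apply: eq_bigr => i _.
rewrite /bump /= add1n subSS expr1n mulr1.
have h := mul_bin_diag j.+1 i; simpl in h.
have hC : ('C(j.+1, i.+1)%:R : R) = (j.+1)%:R * 'C(j, i)%:R / (i.+1)%:R.
  rewrite -natrM h natrM; field; by rewrite addrC natr1 pnatr_eq0.
rewrite -[x ^+ (j - i) *+ _]mulr_natr hC /Lf; field.
by rewrite !(addrC 1) !natr1 !pnatr_eq0.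
Qed.

Lemma ec_succ (c : 'I_b) : ec c + 1 = (b - c)%:R.
Proof. by rewrite /ec natr1; congr (_%:R); have := ltn_ord c; lia. Qed.

Lemma ec_sub (c : 'I_b) : ec c = (b - c.+1)%:R.
Proof. by rewrite /ec; congr (_%:R); lia. Qed.

Lemma ident j : \sum_(c < b) Rop (ec c) j Lf = b%:R ^+ j.+1 * Lf j.
Proof.
under eq_bigr do rewrite /Rop sum_binom_div ec_succ ec_sub.
rewrite -mulr_sumr (telesc j.+1 b) expr0n /= subr0 mulrC /Lf; field.
by rewrite !(addrC 1) !natr1 !pnatr_eq0.
Qed.

Lemma Wcvg j : cvgn (fun k => W k j).
Proof.
case: j => [|j].
  have -> : (fun k => W k 0) = fun=> b%:R by apply: funext => k; rewrite W0.
  apply/cvg_ex; exists b%:R; exact: cvg_cst.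
apply: nonincreasing_is_cvgn.
  apply: (@homo_leq _ _ (fun x y => y <= x)).
  - by move=> x; exact: lexx.
  - by move=> y x z h1 h2; exact: le_trans h2 h1.
  - by move=> i; have := D_pos i (ltn0Sn j); rewrite /D subr_gt0 => /ltW.
exists 0 => _ [n _ <-]; exact: W_ge0.
Qed.

Definition L j := limn (fun k => W k j).

Lemma W_recS k j : W k.+1 j = (b%:R ^+ j.+1)^-1 *
    (\sum_(c < b | (c:nat) != d) Rop (ec c) j (W k.+1) + Rop (ec d) j (W k)).
Proof. by rewrite W_rec /= add0r. Qed.

Lemma WcvgS i : (fun k => W k.+1 i) @ \oo --> L i.
Proof. by rewrite (cvg_shiftS (fun k => W k i)); exact: Wcvg. Qed.

Lemma L_eq j : L j = (b%:R ^+ j.+1)^-1 * \sum_(c < b) Rop (ec c) j L.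
Proof.
have h1 := @WcvgS j.
have h2 : (fun k => W k.+1 j) @ \oo --> (b%:R ^+ j.+1)^-1 *
    (\sum_(c < b | (c:nat) != d) Rop (ec c) j L + Rop (ec d) j L).
  under eq_fun do rewrite W_recS.
  apply: cvg_cM; apply: cvgD.
    apply: cvg_big => c _; apply: Rop_cvg => i; exact: WcvgS.
  apply: Rop_cvg => i; exact: Wcvg.
have := cvg_lim (@Rhausdorff R) h1; rewrite (cvg_lim (@Rhausdorff R) h2) => <-.
by rewrite (sum_split_d (fun c => Rop (ec c) j L)) addrC.
Qed.

Lemma sum_Rop_split j V : \sum_(c < b) Rop (ec c) j V =
  b%:R * V j + \sum_(c < b) \sum_(i < j) 'C(j, i)%:R * (ec c) ^+ (j - i) * V i.
Proof.
have -> : b%:R * V j = \sum_(c < b) V j by rewrite sumr_const card_ord mulr_natl.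
rewrite -big_split /=; apply: eq_bigr => c _; exact: Rop_split.
Qed.

Lemma L_Lf j : L j = Lf j.
Proof.
have hB := B_gt0.
elim/ltn_ind: j => j IH.
case: j IH => [|j] IH.
  rewrite /L /Lf divr1.
  have -> : (fun k => W k 0) = fun=> b%:R by apply: funext => k; rewrite W0.
  exact: lim_cst.
have E1 := L_eq j.+1.
have E2 := ident j.+1.
rewrite sum_Rop_split in E1; rewrite sum_Rop_split in E2.
have hr : \sum_(c < b) \sum_(i < j.+1) 'C(j.+1, i)%:R * (ec c) ^+ (j.+1 - i) * L i =
   \sum_(c < b) \sum_(i < j.+1) 'C(j.+1, i)%:R * (ec c) ^+ (j.+1 - i) * Lf i.
  apply: eq_bigr => c _; apply: eq_bigr => i _; by rewrite IH.
rewrite hr in E1.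
set r := \sum_(c < b) _ in E1 E2.
have hBj : 0 < (b%:R : R) ^+ j.+2 by exact: Bl_gt0.
have E3 : b%:R ^+ j.+2 * L j.+1 = b%:R * L j.+1 + r.
  by rewrite {1}E1 mulrA mulfV ?mul1r // lt0r_neq0.
have hgt : (b%:R : R) < b%:R ^+ j.+2.
  by rewrite exprS ltr_pMr //; apply: exprn_egt1 => //; rewrite ltr1n.
have : (b%:R ^+ j.+2 - b%:R) * (L j.+1 - Lf j.+1) = 0.
  rewrite mulrBl !mulrBr E3 -E2; ring.
move=> H0.
have hne : (b%:R : R) ^+ j.+2 - b%:R != 0 by rewrite subr_eq0 (gt_eqF hgt).
apply/eqP; rewrite -subr_eq0; move/eqP: H0; rewrite mulf_eq0 (negbTE hne) //.
Qed.
End S.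

Unset Implicit Arguments.

Theorem mainTheorem17 (R : realType) (b d : nat) (hb : (2 <= b)%N) (hd : (d < b)%N)
  (m : nat) (hm : (1 <= m)%N) :
  (forall k : nat, vmom R b d k 0 = b%:R) /\
  (forall k : nat, vmom R b d k m <= b%:R) /\
  (forall k : nat, vmom R b d k.+1 m < vmom R b d k m) /\
  ((fun k : nat => vmom R b d k m) @ \oo --> (b%:R / (m.+1)%:R : R)).
Proof.
split; first by move=> k; exact: (W0 R hb hd k).
split.
  move=> k; rewrite -(W0 R hb hd k); exact: (W_le0 R hb hd k m).
split.
  move=> k; rewrite -subr_gt0; exact: (D_pos R hb hd k hm).
have h := @Wcvg R b d hb hd m.
have E := L_Lf R hb hd m.
rewrite /L /Lf in E.
rewrite E in h.
exact: h.
Qed.
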